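(* Let $H$ be the orthocenter of $T=P_1P_2P_3$. For each $i$, with $\{i,j,k\}=\{1,2,3\}$: the perpendicular from $P_i$ to the line $P_j'P_k'$ passes through $-M$ (the reflection of $M$ in $O$), and the perpendicular from $P_i'$ to the line $P_jP_k$ passes through $2H-M$ (the reflection of $M$ in $H$). Hence $T$ and $T'=P_1'P_2'P_3'$ are orthologic with orthology centers $-M$ and $2H-M$.
   Context: Let $a>b>0$ and $c>0$ with $c^2=a^2-b^2$. Let $\mathcal{E}$ be the ellipse $x^2/a^2+y^2/b^2=1$ with center $O=(0,0)$, parametrized by $P(t)=(a\cos t,b\sin t)$. Fix $u\in\mathbb{R}$, let $M=(a\cos u,b\sin u)$ and $\Delta_u(t)=(x_u(t),y_u(t))$, where $x_u(t)=\frac1a\big(c^2(1+\cos(t+u))\cos t-a^2\cos u\big)$ and $y_u(t)=\frac1b\big(c^2\cos t\sin(t+u)-c^2\sin t-a^2\sin u\big)$ (the negative pedal curve of $\mathcal{E}$ with respect to $M$). For $i=1,2,3$ let $t_i=-u/3-2\pi(i-1)/3$, $P_i=P(t_i)$, $P_i'=\Delta_u(t_i)$ (the cusps). Two triangles $ABC$, $DEF$ are orthologic if the perpendiculars from $A,B,C$ to $EF,FD,DE$ respectively are concurrent; the concurrence points of these perpendiculars and of the perpendiculars from $D,E,F$ to $BC,CA,AB$ are the orthology centers. *)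

(* Defs.v *)
From Stdlib Require Import Reals.
Open Scope R_scope.

Definition pt := (R * R)%type.
Definition padd (p q : pt) : pt := (fst p + fst q, snd p + snd q).
Definition psub (p q : pt) : pt := (fst p - fst q, snd p - snd q).
Definition pscale (k : R) (p : pt) : pt := (k * fst p, k * snd p).
Definition pdot (p q : pt) : R := fst p * fst q + snd p * snd q.

Definition perp_through (A B C X : pt) : Prop := pdot (psub X A) (psub C B) = 0.

Definition is_orthocenter (A B C H : pt) : Prop :=
  perp_through A B C H /\ perp_through B C A H /\ perp_through C A B H.

Definition orthology_center (A B C D E F X : pt) : Prop :=
  perp_through A E F X /\ perp_through B F D X /\ perp_through C D E X.

Definition orthologic_with_centers (A B C D E F X Y : pt) : Prop :=
  orthology_center A B C D E F X /\ orthology_center D E F A B C Y.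

Definition ellP (a b t : R) : pt := (a * cos t, b * sin t).

Definition negPedal (a b c u t : R) : pt :=
  ((c ^ 2 * (1 + cos (t + u)) * cos t - a ^ 2 * cos u) / a,
   (c ^ 2 * cos t * sin (t + u) - c ^ 2 * sin t - a ^ 2 * sin u) / b).

Definition tcusp (u : R) (i : nat) : R := - u / 3 - 2 * PI * INR (i - 1) / 3.

(* Main.v *)
Require Import Defs.
From Stdlib Require Import Reals Lra Lia.
Open Scope R_scope.

Lemma cosw : cos (2*PI/3) = -1/2.
Proof. replace (2*PI/3) with (PI - PI/3) by field. rewrite cos_minus, cos_PI, sin_PI, cos_PI3. lra. Qed.
Lemma sinw : sin (2*PI/3) = sqrt 3/2.
Proof. replace (2*PI/3) with (PI - PI/3) by field. rewrite sin_minus, cos_PI, sin_PI, sin_PI3. lra. Qed.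
Lemma sq3 : sqrt 3 * sqrt 3 = 3.
Proof. apply sqrt_sqrt; lra. Qed.
Lemma cosw2 : cos (2*PI/3 + 2*PI/3) = -1/2.
Proof. rewrite cos_plus, cosw, sinw. pose proof sq3. nra. Qed.
Lemma sinw2 : sin (2*PI/3 + 2*PI/3) = - sqrt 3/2.
Proof. rewrite sin_plus, cosw, sinw. lra. Qed.

Definition c2 (C S : R) := C*C - S*S.
Definition s2 (C S : R) := 2*S*C.
Definition cuP C S := C*c2 C S - S*s2 C S.
Definition suP C S := -(s2 C S*C + c2 C S*S).
Definition ctP (i : nat) (C S r : R) :=
  match i with 0%nat => C | 1%nat => C*(-1/2) + S*(r/2) | _ => C*(-1/2) + S*(-r/2) end.
Definition stP (i : nat) (C S r : R) :=
  match i with 0%nat => S | 1%nat => S*(-1/2) - C*(r/2) | _ => S*(-1/2) - C*(-r/2) end.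
Definition cpP (i : nat) (C S r : R) :=
  match i with 0%nat => c2 C S | 1%nat => c2 C S*(-1/2) - s2 C S*(r/2)
  | _ => c2 C S*(-1/2) - s2 C S*(-r/2) end.
Definition spP (i : nat) (C S r : R) :=
  match i with 0%nat => - s2 C S | 1%nat => -(s2 C S*(-1/2) + c2 C S*(r/2))
  | _ => -(s2 C S*(-1/2) + c2 C S*(-r/2)) end.
Definition NP a b i C S r := (a^2-b^2)*(1+cpP i C S r)*ctP i C S r - a^2*cuP C S.
Definition MP a b i C S r := (a^2-b^2)*ctP i C S r*spP i C S r - (a^2-b^2)*stP i C S r - a^2*suP C S.
Definition E1 a b i j k C S r :=
  (-cuP C S - ctP i C S r)*(NP a b k C S r - NP a b j C S r)
  + (-suP C S - stP i C S r)*(MP a b k C S r - MP a b j C S r).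
Definition E2 a b i j k C S r :=
  (2*a*a*ctP i C S r - a*a*cuP C S - NP a b i C S r)*(ctP k C S r - ctP j C S r)
  + (2*b*b*stP i C S r - b*b*suP C S - MP a b i C S r)*(stP k C S r - stP j C S r).
Definition q1_A1 (a b C S r : R) : R := ((2)*b^2*C*S*r + (1)*b^2*C*S^3*r + (1)*b^2*C^3*S*r + (-2)*a^2*C*S*r + (-1)*a^2*C*S^3*r + (-1)*a^2*C^3*S*r).
Definition q2_A1 (a b C S r : R) : R := 0.
Definition q1_B1 (a b C S r : R) : R := 0.
Definition q2_B1 (a b C S r : R) : R := 0.
Definition q1_A2 (a b C S r : R) : R := ((-3/4)*b^2 + (1/4)*b^2*r^2 + (-3/2)*b^2*S^2 + (-1/4)*b^2*S^4*r^2 + (-17/8)*b^2*C*S*r + (3/8)*b^2*C*S*r^3 + (-1/2)*b^2*C*S^3*r + (27/8)*b^2*C^2 + (-5/8)*b^2*C^2*r^2 + (3/4)*b^2*C^2*S^2 + (-1/4)*b^2*C^2*S^2*r^2 + (-1/2)*b^2*C^3*S*r + (3/4)*b^2*C^4 + (3/4)*a^2 + (-1/4)*a^2*r^2 + (3/2)*a^2*S^2 + (1/4)*a^2*S^4*r^2 + (17/8)*a^2*C*S*r + (-3/8)*a^2*C*S*r^3 + (1/2)*a^2*C*S^3*r + (-27/8)*a^2*C^2 + (5/8)*a^2*C^2*r^2 + (-3/4)*a^2*C^2*S^2 + (1/4)*a^2*C^2*S^2*r^2 + (1/2)*a^2*C^3*S*r + (-3/4)*a^2*C^4).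
Definition q2_A2 (a b C S r : R) : R := ((1/4)*b^2 + (3/8)*b^2*C*S*r + (-9/8)*b^2*C^2 + (-1/2)*b^2*C^3*S*r + (1/2)*b^2*C^4 + (-1/4)*a^2 + (-3/8)*a^2*C*S*r + (9/8)*a^2*C^2 + (1/2)*a^2*C^3*S*r + (-1/2)*a^2*C^4).
Definition q1_B2 (a b C S r : R) : R := ((-9/4)*b^2 + (3/4)*b^2*r^2 + (-3/2)*b^2*S^2 + (1/2)*b^2*S^2*r^2 + (9/8)*b^2*C*S*r + (-3/8)*b^2*C*S*r^3 + (39/8)*b^2*C^2 + (-13/8)*b^2*C^2*r^2 + (3/4)*a^2 + (-1/4)*a^2*r^2 + (3/2)*a^2*S^2 + (-1/2)*a^2*S^2*r^2 + (-9/8)*a^2*C*S*r + (3/8)*a^2*C*S*r^3 + (-39/8)*a^2*C^2 + (13/8)*a^2*C^2*r^2).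
Definition q2_B2 (a b C S r : R) : R := ((3/4)*b^2 + (-3/8)*b^2*C*S*r + (-17/8)*b^2*C^2 + (1/2)*b^2*C^3*S*r + (3/2)*b^2*C^4 + (-1/4)*a^2 + (3/8)*a^2*C*S*r + (17/8)*a^2*C^2 + (-1/2)*a^2*C^3*S*r + (-3/2)*a^2*C^4).
Definition q1_A3 (a b C S r : R) : R := ((3/4)*b^2 + (-1/4)*b^2*r^2 + (3/2)*b^2*S^2 + (1/4)*b^2*S^4*r^2 + (-17/8)*b^2*C*S*r + (3/8)*b^2*C*S*r^3 + (-1/2)*b^2*C*S^3*r + (-27/8)*b^2*C^2 + (5/8)*b^2*C^2*r^2 + (-3/4)*b^2*C^2*S^2 + (1/4)*b^2*C^2*S^2*r^2 + (-1/2)*b^2*C^3*S*r + (-3/4)*b^2*C^4 + (-3/4)*a^2 + (1/4)*a^2*r^2 + (-3/2)*a^2*S^2 + (-1/4)*a^2*S^4*r^2 + (17/8)*a^2*C*S*r + (-3/8)*a^2*C*S*r^3 + (1/2)*a^2*C*S^3*r + (27/8)*a^2*C^2 + (-5/8)*a^2*C^2*r^2 + (3/4)*a^2*C^2*S^2 + (-1/4)*a^2*C^2*S^2*r^2 + (1/2)*a^2*C^3*S*r + (3/4)*a^2*C^4).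
Definition q2_A3 (a b C S r : R) : R := ((-1/4)*b^2 + (3/8)*b^2*C*S*r + (9/8)*b^2*C^2 + (-1/2)*b^2*C^3*S*r + (-1/2)*b^2*C^4 + (1/4)*a^2 + (-3/8)*a^2*C*S*r + (-9/8)*a^2*C^2 + (1/2)*a^2*C^3*S*r + (1/2)*a^2*C^4).
Definition q1_B3 (a b C S r : R) : R := ((9/4)*b^2 + (-3/4)*b^2*r^2 + (3/2)*b^2*S^2 + (-1/2)*b^2*S^2*r^2 + (9/8)*b^2*C*S*r + (-3/8)*b^2*C*S*r^3 + (-39/8)*b^2*C^2 + (13/8)*b^2*C^2*r^2 + (-3/4)*a^2 + (1/4)*a^2*r^2 + (-3/2)*a^2*S^2 + (1/2)*a^2*S^2*r^2 + (-9/8)*a^2*C*S*r + (3/8)*a^2*C*S*r^3 + (39/8)*a^2*C^2 + (-13/8)*a^2*C^2*r^2).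
Definition q2_B3 (a b C S r : R) : R := ((-3/4)*b^2 + (-3/8)*b^2*C*S*r + (17/8)*b^2*C^2 + (1/2)*b^2*C^3*S*r + (-3/2)*b^2*C^4 + (1/4)*a^2 + (3/8)*a^2*C*S*r + (-17/8)*a^2*C^2 + (-1/2)*a^2*C^3*S*r + (3/2)*a^2*C^4).
Lemma idA1 a b C S r : S*S+C*C = 1 -> r*r = 3 -> E1 a b 0 1 2 C S r = 0.
Proof.
intros h1 h2. transitivity (q1_A1 a b C S r * (S*S+C*C-1) + q2_A1 a b C S r * (r*r-3)).
- unfold E1, NP, MP, ctP, stP, cpP, spP, cuP, suP, c2, s2, q1_A1, q2_A1. cbv beta iota. field.
- rewrite h1, h2. ring.
Qed.
Lemma idB1 a b C S r : S*S+C*C = 1 -> r*r = 3 -> E2 a b 0 1 2 C S r = 0.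
Proof.
intros h1 h2. transitivity (q1_B1 a b C S r * (S*S+C*C-1) + q2_B1 a b C S r * (r*r-3)).
- unfold E2, NP, MP, ctP, stP, cpP, spP, cuP, suP, c2, s2, q1_B1, q2_B1. cbv beta iota. field.
- rewrite h1, h2. ring.
Qed.
Lemma idA2 a b C S r : S*S+C*C = 1 -> r*r = 3 -> E1 a b 1 2 0 C S r = 0.
Proof.
intros h1 h2. transitivity (q1_A2 a b C S r * (S*S+C*C-1) + q2_A2 a b C S r * (r*r-3)).
- unfold E1, NP, MP, ctP, stP, cpP, spP, cuP, suP, c2, s2, q1_A2, q2_A2. cbv beta iota. field.
- rewrite h1, h2. ring.
Qed.
Lemma idB2 a b C S r : S*S+C*C = 1 -> r*r = 3 -> E2 a b 1 2 0 C S r = 0.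
Proof.
intros h1 h2. transitivity (q1_B2 a b C S r * (S*S+C*C-1) + q2_B2 a b C S r * (r*r-3)).
- unfold E2, NP, MP, ctP, stP, cpP, spP, cuP, suP, c2, s2, q1_B2, q2_B2. cbv beta iota. field.
- rewrite h1, h2. ring.
Qed.
Lemma idA3 a b C S r : S*S+C*C = 1 -> r*r = 3 -> E1 a b 2 0 1 C S r = 0.
Proof.
intros h1 h2. transitivity (q1_A3 a b C S r * (S*S+C*C-1) + q2_A3 a b C S r * (r*r-3)).
- unfold E1, NP, MP, ctP, stP, cpP, spP, cuP, suP, c2, s2, q1_A3, q2_A3. cbv beta iota. field.
- rewrite h1, h2. ring.
Qed.
Lemma idB3 a b C S r : S*S+C*C = 1 -> r*r = 3 -> E2 a b 2 0 1 C S r = 0.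
Proof.
intros h1 h2. transitivity (q1_B3 a b C S r * (S*S+C*C-1) + q2_B3 a b C S r * (r*r-3)).
- unfold E2, NP, MP, ctP, stP, cpP, spP, cuP, suP, c2, s2, q1_B3, q2_B3. cbv beta iota. field.
- rewrite h1, h2. ring.
Qed.

Definition Nf a c u t := c^2*(1+cos(t+u))*cos t - a^2*cos u.
Definition Mf a c u t := c^2*cos t*sin(t+u) - c^2*sin t - a^2*sin u.

Lemma red1 a b c u t t2 t3 : a <> 0 -> b <> 0 ->
  (-cos u - cos t)*(Nf a c u t3 - Nf a c u t2) + (-sin u - sin t)*(Mf a c u t3 - Mf a c u t2) = 0 ->
  perp_through (ellP a b t) (negPedal a b c u t2) (negPedal a b c u t3) (pscale (-1) (ellP a b u)).
Proof.
intros ha hb hE. unfold perp_through, pdot, psub, pscale, ellP, negPedal; simpl.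
unfold Nf, Mf in hE. rewrite <- hE. field. auto.
Qed.

Lemma red2 a b c u t t2 t3 (H : pt) : a <> 0 -> b <> 0 ->
  perp_through (ellP a b t) (ellP a b t2) (ellP a b t3) H ->
  (2*a*a*cos t - a*a*cos u - Nf a c u t)*(cos t3 - cos t2)
  + (2*b*b*sin t - b*b*sin u - Mf a c u t)*(sin t3 - sin t2) = 0 ->
  perp_through (negPedal a b c u t) (ellP a b t2) (ellP a b t3) (psub (pscale 2 H) (ellP a b u)).
Proof.
intros ha hb hH hE. destruct H as [h1 h2].
unfold perp_through, pdot, psub, pscale, ellP, negPedal in *; simpl in *.
unfold Nf, Mf in hE.
match type of hH with ?x = 0 => match type of hE with ?y = 0 =>
  transitivity (2*x+y); [field; auto | rewrite hH, hE; ring] end end.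
Qed.

Theorem theorem8p1 (a b c u : R) (H : pt) :
  a > b -> b > 0 -> c > 0 -> c ^ 2 = a ^ 2 - b ^ 2 ->
  let M := ellP a b u in
  let P1 := ellP a b (tcusp u 1) in
  let P2 := ellP a b (tcusp u 2) in
  let P3 := ellP a b (tcusp u 3) in
  let P1' := negPedal a b c u (tcusp u 1) in
  let P2' := negPedal a b c u (tcusp u 2) in
  let P3' := negPedal a b c u (tcusp u 3) in
  is_orthocenter P1 P2 P3 H ->
  let mM := pscale (-1) M in
  let HM := psub (pscale 2 H) M in
  (perp_through P1 P2' P3' mM /\ perp_through P2 P3' P1' mM /\
   perp_through P3 P1' P2' mM) /\
  (perp_through P1' P2 P3 HM /\ perp_through P2' P3 P1 HM /\
   perp_through P3' P1 P2 HM) /\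
  orthologic_with_centers P1 P2 P3 P1' P2' P3' mM HM.
Proof.
intros hab hb hc hc2 M P1 P2 P3 P1' P2' P3' [o1 [o2 o3]] mM HM.
assert (ha : a <> 0) by lra. assert (hb' : b <> 0) by lra.
set (s := -u/3).
assert (hu : u = -(s+(s+s))) by (unfold s; field).
assert (t1 : tcusp u 1 = s) by (unfold tcusp, s; simpl; field).
assert (t2 : tcusp u 2 = s - 2*PI/3) by (unfold tcusp, s; simpl; field).
assert (t3 : tcusp u 3 = s - (2*PI/3 + 2*PI/3)) by (unfold tcusp, s; simpl; field).
set (C := cos s). set (Sn := sin s). set (r := sqrt 3).
assert (hp : Sn*Sn + C*C = 1) by (unfold Sn, C; rewrite <- (sin2_cos2 s); unfold Rsqr; ring).
assert (hr : r*r = 3) by apply sq3.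
assert (ecu : cos u = cuP C Sn).
{ rewrite hu, cos_neg, cos_plus, cos_plus, sin_plus. unfold cuP, c2, s2. fold C Sn. ring. }
assert (esu : sin u = suP C Sn).
{ rewrite hu, sin_neg, sin_plus, sin_plus, cos_plus. unfold suP, c2, s2. fold C Sn. ring. }
assert (ec : forall i, (i < 3)%nat -> cos (tcusp u (S i)) = ctP i C Sn r /\ sin (tcusp u (S i)) = stP i C Sn r
   /\ cos (tcusp u (S i) + u) = cpP i C Sn r /\ sin (tcusp u (S i) + u) = spP i C Sn r).
{ intros i hi. destruct i as [|[|[|i]]]; [ | | | lia].
  - rewrite t1. replace (s+u) with (-(s+s)) by (rewrite hu; ring).
    unfold ctP, stP, cpP, spP, c2, s2. cbv beta iota. rewrite cos_neg, sin_neg, cos_plus, sin_plus. fold C Sn.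
    repeat split; ring.
  - rewrite t2. replace (s - 2*PI/3 + u) with (-((s+s) + 2*PI/3)) by (rewrite hu; ring).
    unfold ctP, stP, cpP, spP, c2, s2. cbv beta iota. rewrite cos_neg, sin_neg, (cos_plus (s+s) (2*PI/3)), (sin_plus (s+s) (2*PI/3)), (cos_plus s s), (sin_plus s s), cosw, sinw, cos_minus, sin_minus, cosw, sinw.
      fold C Sn r. repeat split; field.
  - rewrite t3. replace (s - (2*PI/3 + 2*PI/3) + u) with (-((s+s) + (2*PI/3 + 2*PI/3))) by (rewrite hu; ring).
    unfold ctP, stP, cpP, spP, c2, s2. cbv beta iota. rewrite cos_neg, sin_neg, (cos_plus (s+s) (2*PI/3+2*PI/3)), (sin_plus (s+s) (2*PI/3+2*PI/3)), (cos_plus s s), (sin_plus s s), cosw2, sinw2, cos_minus, sin_minus, cosw2, sinw2.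
      fold C Sn r. repeat split; field. }
destruct (ec 0%nat ltac:(lia)) as [c1 [s1 [cp1 sp1]]].
destruct (ec 1%nat ltac:(lia)) as [c2' [s2' [cp2 sp2]]].
destruct (ec 2%nat ltac:(lia)) as [c3 [s3 [cp3 sp3]]].
simpl in c1, s1, cp1, sp1, c2', s2', cp2, sp2, c3, s3, cp3, sp3.
assert (A1 : perp_through P1 P2' P3' mM).
{ apply red1; auto. unfold Nf, Mf. rewrite hc2, ecu, esu, c1, s1, c2', s2', c3, s3, cp2, sp2, cp3, sp3.
  eapply eq_trans; [| exact (idA1 a b C Sn r hp hr)]. unfold E1, NP, MP, ctP, stP, cpP, spP; cbv beta iota. field. }
assert (A2 : perp_through P2 P3' P1' mM).
{ apply red1; auto. unfold Nf, Mf. rewrite hc2, ecu, esu, c1, s1, c2', s2', c3, s3, cp1, sp1, cp3, sp3.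
  eapply eq_trans; [| exact (idA2 a b C Sn r hp hr)]. unfold E1, NP, MP, ctP, stP, cpP, spP; cbv beta iota. field. }
assert (A3 : perp_through P3 P1' P2' mM).
{ apply red1; auto. unfold Nf, Mf. rewrite hc2, ecu, esu, c1, s1, c2', s2', c3, s3, cp1, sp1, cp2, sp2.
  eapply eq_trans; [| exact (idA3 a b C Sn r hp hr)]. unfold E1, NP, MP, ctP, stP, cpP, spP; cbv beta iota. field. }
assert (B1 : perp_through P1' P2 P3 HM).
{ apply red2; auto. unfold Nf, Mf. rewrite hc2, ecu, esu, c1, s1, c2', s2', c3, s3, cp1, sp1.
  eapply eq_trans; [| exact (idB1 a b C Sn r hp hr)]. unfold E2, NP, MP, ctP, stP, cpP, spP; cbv beta iota. field. }
assert (B2 : perp_through P2' P3 P1 HM).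
{ apply red2; auto. unfold Nf, Mf. rewrite hc2, ecu, esu, c1, s1, c2', s2', c3, s3, cp2, sp2.
  eapply eq_trans; [| exact (idB2 a b C Sn r hp hr)]. unfold E2, NP, MP, ctP, stP, cpP, spP; cbv beta iota. field. }
assert (B3 : perp_through P3' P1 P2 HM).
{ apply red2; auto. unfold Nf, Mf. rewrite hc2, ecu, esu, c1, s1, c2', s2', c3, s3, cp3, sp3.
  eapply eq_trans; [| exact (idB3 a b C Sn r hp hr)]. unfold E2, NP, MP, ctP, stP, cpP, spP; cbv beta iota. field. }
split; [tauto | split; [tauto |]].
unfold orthologic_with_centers, orthology_center. tauto.
Qed.
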